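(* Let $n\ge2$ and $\nu\in\mathcal{F}_{C_n}$, writing $\nu(\alpha)=(\nu(\alpha)_1,\dots,\nu(\alpha)_{n+1})$. Then the map $\mathsf{b}$ from formulas to $\{0,1\}$ given by $\mathsf{b}(\alpha)=\nu(\alpha)_1$ is a $C_n$-bivaluation, and $\mathsf{b}(\alpha)=1$ iff $\nu(\alpha)\in D_n$.
   Context: $\Sigma$ has unary $\neg$ and binary $\wedge,\vee,\to$; formulas over a denumerable set of variables; $\alpha^0=\alpha$, $\alpha^{k+1}=\neg(\alpha^k\wedge\neg\alpha^k)$. A $C_n$-bivaluation is a map $\mathsf{b}$ from formulas to $\{0,1\}$ such that: (B1) $\mathsf{b}(\alpha\wedge\beta)=1$ iff $\mathsf{b}(\alpha)=\mathsf{b}(\beta)=1$; (B2) $\mathsf{b}(\alpha\vee\beta)=1$ iff $\mathsf{b}(\alpha)=1$ or $\mathsf{b}(\beta)=1$; (B3) $\mathsf{b}(\alpha\to\beta)=1$ iff $\mathsf{b}(\alpha)=0$ or $\mathsf{b}(\beta)=1$; (B4) $\mathsf{b}(\alpha)=0$ implies $\mathsf{b}(\neg\alpha)=1$; (B5) $\mathsf{b}(\neg\neg\alpha)=1$ implies $\mathsf{b}(\alpha)=1$; (B6)$_n$ $\mathsf{b}(\alpha^{n-1})=\mathsf{b}(\neg(\alpha^{n-1}))$ iff $\mathsf{b}(\alpha^n)=0$; (B7) $\mathsf{b}(\alpha)=\mathsf{b}(\neg\alpha)$ iff $\mathsf{b}(\neg(\alpha^1))=1$; (B8) if $\mathsf{b}(\alpha)\ne\mathsf{b}(\neg\alpha)$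 and $\mathsf{b}(\beta)\ne\mathsf{b}(\neg\beta)$ then $\mathsf{b}(\alpha\#\beta)\ne\mathsf{b}(\neg(\alpha\#\beta))$ for $\#\in\{\wedge,\vee,\to\}$. Fix $n\ge2$. $B_n=\{z\in\{0,1\}^{n+1}:(z_1\wedge\dots\wedge z_k)\vee z_{k+1}=1\text{ for all }1\le k\le n\}$, with elements $T_n=(1,0,1,\dots,1)$, $t^n_i$ ($0\le i\le n-2$) having $z_1=z_2=1$ and a single $0$ at coordinate $i+3$, $t^n_{n-1}=(1,\dots,1)$, $F_n=(0,1,\dots,1)$. $D_n=\{z:z_1=1\}$, $Boo_n=\{T_n,F_n\}$, $I_n=B_n\setminus Boo_n$. $\mathcal{A}_{C_n}$ on $B_n$: $\tilde\neg z=\{w\in B_n:w_1=z_2,\ w_2\le z_1\}$; for $\#\in\{\wedge,\vee,\to\}$, $z\tilde\#w=\{u\in Boo_n:u_1=z_1\#w_1\}$ if $z,w\in Boo_n$, else $\{u\in B_n:u_1=z_1\#w_1\}$. A valuation is $\nu$ with $\nu(\neg\alpha)\in\tilde\neg\nu(\alpha)$, $\nu(\alpha\#\beta)\in\nu(\alpha)\tilde\#\nu(\beta)$. $\mathcal{F}_{C_n}$: valuations with $\nu(\alpha)=t^n_0\Rightarrow\nu(\alpha\wedge\neg\alpha)=T_n$, and for $1\le k\le n-1$, $\nu(\alpha)=t^n_k\Rightarrow(\nu(\alpha\wedge\neg\alpha)\in I_n$ and $\nu(\alpha^1)=t^n_{k-1})$. *)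

(* Defs.v *)
From mathcomp Require Import all_boot.
Set Implicit Arguments. Unset Strict Implicit. Unset Printing Implicit Defensive.

Inductive form : Type :=
| Var of nat
| Neg of form
| And of form & form
| Or  of form & form
| Imp of form & form.

Fixpoint fpow (a : form) (k : nat) : form :=
  match k with
  | 0 => a
  | k'.+1 => Neg (And (fpow a k') (Neg (fpow a k')))
  end.

Inductive bconn := cAnd | cOr | cImp.
Definition mk (c : bconn) (a b : form) : form :=
  match c with cAnd => And a b | cOr => Or a b | cImp => Imp a b end.
Definition bop (c : bconn) (x y : bool) : bool :=
  match c with cAnd => x && y | cOr => x || y | cImp => x ==> y end.

Definition is_bival (n : nat) (b : form -> bool) : Prop :=
  (forall a c, b (And a c) = true <-> b a = true /\ b c = true) /\          (* B1 *)
  (forall a c, b (Or a c) = true <-> b a = true \/ b c = true) /\           (* B2 *)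
  (forall a c, b (Imp a c) = true <-> b a = false \/ b c = true) /\         (* B3 *)
  (forall a, b a = false -> b (Neg a) = true) /\                            (* B4 *)
  (forall a, b (Neg (Neg a)) = true -> b a = true) /\                       (* B5 *)
  (forall a, b (fpow a n.-1) = b (Neg (fpow a n.-1)) <-> b (fpow a n) = false) /\ (* B6_n *)
  (forall a, b a = b (Neg a) <-> b (Neg (fpow a 1)) = true) /\              (* B7 *)
  (forall (c : bconn) a a', b a <> b (Neg a) -> b a' <> b (Neg a') ->
       b (mk c a a') <> b (Neg (mk c a a'))).                              (* B8 *)

(* An element z = (z_1,...,z_{n+1}) of {0,1}^{n+1} is represented by a
   finite function on 'I_n.+1; coordinate z_k (1-based) is z at index k-1. *)
Definition vec (n : nat) := {ffun 'I_n.+1 -> bool}.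

Definition crd n (z : vec n) (k : nat) : bool := z (inord k.-1).

Definition inB n (z : vec n) : Prop :=
  forall k, 1 <= k <= n ->
    (forall j, 1 <= j <= k -> crd z j = true) \/ crd z k.+1 = true.

Definition Tn n : vec n := [ffun j : 'I_n.+1 => val j != 1].
Definition Fn n : vec n := [ffun j : 'I_n.+1 => val j != 0].
(* t^n_i: for 0 <= i <= n-2, z_1 = z_2 = 1 and a single 0 at coordinate i+3;
   t^n_{n-1} = (1,...,1). *)
Definition tn n (i : nat) : vec n :=
  if i == n.-1 then [ffun _ : 'I_n.+1 => true]
  else [ffun j : 'I_n.+1 => val j != i.+2].

Definition inD n (z : vec n) : Prop := inB z /\ crd z 1 = true.
Definition inBoo n (z : vec n) : Prop := z = Tn n \/ z = Fn n.
Definition inI n (z : vec n) : Prop := inB z /\ ~ inBoo z.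

(* w in neg~ z *)
Definition negS n (z w : vec n) : Prop :=
  inB w /\ crd w 1 = crd z 2 /\ crd w 2 <= crd z 1.

(* u in z #~ w *)
Definition binS n (c : bconn) (z w u : vec n) : Prop :=
  (inBoo z /\ inBoo w -> inBoo u /\ crd u 1 = bop c (crd z 1) (crd w 1)) /\
  (~ (inBoo z /\ inBoo w) -> inB u /\ crd u 1 = bop c (crd z 1) (crd w 1)).

Definition is_valuation n (nu : form -> vec n) : Prop :=
  (forall a, inB (nu a)) /\
  (forall a, negS (nu a) (nu (Neg a))) /\
  (forall (c : bconn) a a', binS c (nu a) (nu a') (nu (mk c a a'))).

Definition in_FCn n (nu : form -> vec n) : Prop :=
  is_valuation nu /\
  (forall a, nu a = tn n 0 -> nu (And a (Neg a)) = Tn n) /\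
  (forall a k, 1 <= k <= n.-1 -> nu a = tn n k ->
      inI (nu (And a (Neg a))) /\ nu (fpow a 1) = tn n k.-1).

(* Main.v *)
Require Import Defs.
From mathcomp Require Import all_boot zify.
From Stdlib Require Import Classical.
Set Implicit Arguments. Unset Strict Implicit. Unset Printing Implicit Defensive.

Lemma crd_val n (z : vec n) (j : 'I_n.+1) : crd z (val j).+1 = z j.
Proof. by rewrite /crd /= inord_val. Qed.

Lemma Tn1 n : crd (Tn n) 1 = true. Proof. by rewrite /crd ffunE /= inordK. Qed.
Lemma Tn2 n : 1 <= n -> crd (Tn n) 2 = false.
Proof. by move=> h; rewrite /crd ffunE /= inordK. Qed.
Lemma Fn1 n : crd (Fn n) 1 = false. Proof. by rewrite /crd ffunE /= inordK. Qed.
Lemma Fn2 n : 1 <= n -> crd (Fn n) 2 = true.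
Proof. by move=> h; rewrite /crd ffunE /= inordK. Qed.
Lemma tn12 n m : 1 <= n -> crd (tn n m) 1 = true /\ crd (tn n m) 2 = true.
Proof.
move=> h; rewrite /tn; case: ifP => _; first by rewrite /crd !ffunE.
by rewrite /crd !ffunE /= !inordK.
Qed.

Lemma inB12 n (z : vec n) : 1 <= n -> inB z -> crd z 1 || crd z 2.
Proof.
move=> h H; case: (H 1); first by rewrite h.
  by move=> /(_ 1 isT) ->.
by move=> ->; rewrite orbT.
Qed.

Lemma boo_T n (z : vec n) : 1 <= n -> inB z -> crd z 1 = true -> crd z 2 = false -> z = Tn n.
Proof.
move=> hn H h1 h2; apply/ffunP=> j; rewrite !ffunE -crd_val.
case: j => [[|[|j]] /= hj]; first by rewrite h1.
  by rewrite h2.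
case: (H j.+2); first by apply/andP; split; lia.
  by move=> /(_ 2); rewrite h2; move=> /(_ isT).
by move=> ->.
Qed.

Lemma boo_F n (z : vec n) : 1 <= n -> inB z -> crd z 1 = false -> z = Fn n.
Proof.
move=> hn H h1; apply/ffunP=> j; rewrite !ffunE -crd_val.
case: j => [[|j] /= hj]; first by rewrite h1.
case: (H j.+1); first by apply/andP; split; lia.
  by move=> /(_ 1); rewrite h1; move=> /(_ isT).
by move=> ->.
Qed.

Lemma classify n (z : vec n) : 2 <= n -> inB z -> crd z 1 = true -> crd z 2 = true ->
  exists m, m <= n.-1 /\ z = tn n m.
Proof.
move=> hn H h1 h2.
pose P k := (k < n.+1) && ~~ crd z k.+1.
case: (boolP [exists j : 'I_n.+1, ~~ z j]) => [/existsP ex|].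
  have exP : exists k, P k.
    by case: ex => j hj; exists (val j); rewrite /P ltn_ord crd_val.
  case: (ex_minnP exP) => j /andP [hjn hj] hmin.
  have j2 : 2 <= j.
    case: j hjn hj hmin => [|[|j]] //= _; by rewrite ?h1 ?h2.
  exists (j - 2); split; first lia.
  rewrite /tn ifN; last by apply/eqP; lia.
  have -> : (j - 2).+2 = j by lia.
  apply/ffunP => -[i hi]; rewrite !ffunE -crd_val /=.
  case: (ltngtP i j) => hij.
  - apply/negbNE/negP => hc.
    have := hmin i; rewrite /P hi hc /= => /(_ isT).
    by rewrite leqNgt hij.
  - case: (H i); first by apply/andP; split; lia.
      move=> /(_ j.+1); rewrite (negbTE hj) => /(_ _) //. move: hij; clear; move=> hij.
      suff: (1 <= j.+1 <= i) by move=> /[swap] /[apply].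
      by rewrite hij.
    by move=> ->.
  - have -> : i.+1 = j.+1 by rewrite hij.
    by rewrite (negbTE hj).
rewrite negb_exists => /forallP all.
exists n.-1; split => //; rewrite /tn eqxx; apply/ffunP => i; rewrite !ffunE.
by have := all i; rewrite negbK.
Qed.

Lemma booE n (z : vec n) : 1 <= n -> inB z -> inBoo z <-> crd z 1 != crd z 2.
Proof.
move=> hn H; split.
  by case=> ->; rewrite ?Tn1 ?Tn2 ?Fn1 ?Fn2.
case E1: (crd z 1); case E2: (crd z 2) => // _.
  by left; apply: boo_T.
by right; apply: boo_F.
Qed.

Lemma bin1 n (nu : form -> vec n) c a a' : is_valuation nu ->
  crd (nu (mk c a a')) 1 = bop c (crd (nu a) 1) (crd (nu a') 1).
Proof.
case=> _ [_ HC]; case: (HC c a a') => h1 h2.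
by case: (classic (inBoo (nu a) /\ inBoo (nu a'))) => [/h1|/h2] [].
Qed.

Lemma binBoo n (nu : form -> vec n) c a a' : is_valuation nu ->
  inBoo (nu a) -> inBoo (nu a') -> inBoo (nu (mk c a a')).
Proof. by case=> _ [_ HC] ba ba'; case: (HC c a a') => [/(_ (conj ba ba')) []]. Qed.

Lemma neg1 n (nu : form -> vec n) a : is_valuation nu ->
  crd (nu (Neg a)) 1 = crd (nu a) 2.
Proof. by case=> _ [HN _]; case: (HN a) => _ []. Qed.

Lemma neg2 n (nu : form -> vec n) a : is_valuation nu ->
  crd (nu (Neg a)) 2 -> crd (nu a) 1.
Proof. by case=> _ [HN _]; case: (HN a) => _ [] _; case: (crd _ 2); case: (crd _ 1). Qed.

Lemma pow1_boo n (nu : form -> vec n) a : 1 <= n -> is_valuation nu ->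
  inBoo (nu a) -> nu (fpow a 1) = Tn n.
Proof.
move=> hn Hv hb.
have HB := Hv.1.
have hna : inBoo (nu (Neg a)).
  apply/booE => //; move/booE: hb => /(_ hn (HB a)).
  rewrite neg1 //; have := @neg2 _ _ a Hv.
  have := inB12 hn (HB (Neg a)); rewrite neg1 //.
  by move: (crd (nu a) 1) (crd (nu a) 2) (crd (nu (Neg a)) 2) => [] [] [].
have hu := @binBoo _ _ cAnd a (Neg a) Hv hb hna.
have hu1 := @bin1 _ _ cAnd a (Neg a) Hv.
move/booE: hb => /(_ hn (HB a)) hb.
move/booE: hu => /(_ hn (HB _)) hu.
rewrite /= neg1 // in hu1.
apply: boo_T => //=.
  rewrite neg1 //; move: hu; rewrite /= hu1.
  by move: (crd (nu a) 1) (crd (nu a) 2) (crd (nu (And a (Neg a))) 2) hb => [] [] [].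
apply/negP => hh; have := neg2 Hv hh; rewrite /= hu1.
by move: (crd (nu a) 1) (crd (nu a) 2) hb => [] [].
Qed.

Lemma pow1_t0 n (nu : form -> vec n) a : 1 <= n -> in_FCn nu ->
  nu a = tn n 0 -> nu (fpow a 1) = Fn n.
Proof.
move=> hn [Hv [H0 _]] ht.
apply: boo_F => //; first exact: Hv.1.
by rewrite /= neg1 // H0 // Tn2.
Qed.

Lemma pow_inv n (nu : form -> vec n) a j : 2 <= n -> in_FCn nu ->
  inBoo (nu (fpow a j)) \/ exists m, m + j <= n.-1 /\ nu (fpow a j) = tn n m.
Proof.
move=> hn HF; have Hv := HF.1; have HB := Hv.1.
elim: j => [|j IH].
  case E: (crd (nu a) 1 != crd (nu a) 2).
    by left; apply/(booE (ltnW hn) (HB a)).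
  have h12 := @inB12 _ (nu a) (ltnW hn) (HB a).
  move: E; case E1: (crd (nu a) 1); case E2: (crd (nu a) 2) => //= _; last by rewrite E1 E2 in h12.
  right; case: (classify hn (HB a) E1 E2) => m [hm ->]; exists m; split => //; lia.
case: IH => [hb|[m [hm hmt]]].
  by left; rewrite (pow1_boo (a := fpow a j)) //; [left|lia].
case: m hm hmt => [|m] hm hmt.
  by left; rewrite (pow1_t0 (a := fpow a j)) //; [right|lia].
right; exists m; split; first lia.
have [_ [_ Hk]] := HF.
by have [_ ->] := Hk (fpow a j) m.+1 ltac:(apply/andP; split; lia) hmt.
Qed.

Theorem mainTheorem11 (n : nat) (nu : form -> vec n) :
  2 <= n -> in_FCn nu ->
  is_bival n (fun a => crd (nu a) 1) /\
  (forall a, crd (nu a) 1 = true <-> inD (nu a)).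
Proof.
move=> hn HF; have Hv := HF.1; have HB := Hv.1; have hn1 : 1 <= n by lia.
split; last by move=> x; split; [move=> h; split => //; exact: HB | case].
split.
  move=> a c; have := @bin1 _ _ cAnd a c Hv => /= ->.
  by case: (crd (nu a) 1); case: (crd (nu c) 1); intuition congruence.
split.
  move=> a c; have := @bin1 _ _ cOr a c Hv => /= ->.
  by case: (crd (nu a) 1); case: (crd (nu c) 1); intuition congruence.
split.
  move=> a c; have := @bin1 _ _ cImp a c Hv => /= ->.
  by case: (crd (nu a) 1); case: (crd (nu c) 1); intuition congruence.
split.
  move=> a h; rewrite neg1 //; have := inB12 hn1 (HB a); by rewrite h.
split.
  by move=> a hh; apply: (neg2 Hv); rewrite -neg1.
split.
  move=> a; split.
    move=> E; case: (pow_inv a n.-1 hn HF) => [hb|[m [hm hmt]]].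
      by move/booE: hb => /(_ hn1 (HB _)); rewrite -neg1 // E eqxx.
    have m0 : m = 0 by lia.
    subst m; have [_ [H0 _]] := HF.
    have -> : fpow a n = fpow (fpow a n.-1) 1 by rewrite -[in LHS](prednK (ltnW hn)).
    by rewrite /= neg1 // H0 // Tn2.
  have -> : fpow a n = fpow (fpow a n.-1) 1 by rewrite -[in LHS](prednK (ltnW hn)).
  move=> E; rewrite /= neg1 // in E.
  have := inB12 hn1 (HB (And (fpow a n.-1) (Neg (fpow a n.-1)))); rewrite E orbF.
  have := @bin1 _ _ cAnd (fpow a n.-1) (Neg (fpow a n.-1)) Hv => /= -> /andP [-> ->] //.
split.
  move=> a; split.
    move=> E; rewrite /= neg1 //.
    have h12 := inB12 hn1 (HB a); rewrite neg1 // in E.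
    have E1 : crd (nu a) 1 = true by move: h12; rewrite E orbb.
    have E2 : crd (nu a) 2 = true by rewrite -E.
    case: (classify hn (HB a) E1 E2) => m [hm ht].
    case: m hm ht => [|m] hm ht.
      by rewrite (pow1_t0 hn1 HF ht) Fn2.
    have [_ [_ Hk]] := HF.
    have [_ ->] := Hk a m.+1 ltac:(apply/andP; split; lia) ht.
    by have [] := tn12 m hn1.
  move=> hh; rewrite neg1 // in hh; have := neg2 Hv hh; rewrite /= neg1 //.
  have := @bin1 _ _ cAnd a (Neg a) Hv => /= ->; rewrite neg1 //.
  by case/andP => -> ->.
move=> c a a' h h'.
have ba : inBoo (nu a) by apply/(booE hn1 (HB a)); rewrite -neg1 //; apply/eqP.
have ba' : inBoo (nu a') by apply/(booE hn1 (HB a')); rewrite -neg1 //; apply/eqP.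
have := binBoo c Hv ba ba'; move/booE => /(_ hn1 (HB _)).
by rewrite neg1 // => /eqP.
Qed.
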